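(* Let $N = n+1\ge 3$ be odd and let $\boldsymbol{\lambda} = (\lambda_1,\dots,\lambda_N)\in\Lambda_N$. The upward-pointing inner normal vector of the lifted simplex $\Omega_\omega(G^{\mathbf{0}}_{\boldsymbol{\lambda}}) = \operatorname{conv}\{(\mathbf{a},\omega(\mathbf{a}))\mid \mathbf{a}\text{ a vertex of } G^{\mathbf{0}}_{\boldsymbol{\lambda}}\}\subset\mathbb{R}^{N}$ (normalized to have last coordinate $1$) is $\mathbf{x} = (x_1,\dots,x_N)$ where \[ x_k = \begin{cases} \sum_{i=1}^k \lambda_i & \text{if } k < N,\\ 1 & \text{if } k = N.\end{cases} \]
   Context: $\mathbf{e}_1,\dots,\mathbf{e}_n$ is the standard basis of $\mathbb{R}^n$, with $\mathbf{e}_0=\mathbf{e}_N=\mathbf{0}$. For odd $N$, $\Lambda_N = \bigcup_{j=1}^N\Lambda_{j,N}$ with $\Lambda_{j,N} = \{(\lambda_1,\dots,\lambda_N)\mid\lambda_j=0,\ \lambda_i\in\{-1,1\}\text{ for }i\neq j,\ \sum_i\lambda_i=0\}$, and for $\boldsymbol{\lambda}\in\Lambda_{j,N}$, $G^{\mathbf{0}}_{\boldsymbol{\lambda}} = \operatorname{conv}(\{\mathbf{0}\}\cup\{\lambda_i(\mathbf{e}_{i-1}-\mathbf{e}_i)\mid 1\le i\le N,\ i\ne j\})$. The height function is $\omega(\mathbf{0})=0$ and $\omega(\mathbf{a})=1$ for $\mathbf{a}\ne\mathbf{0}$. These simplices are the lower facets of the lifted adjacency polytope $\operatorname{conv}\{(\mathbf{a},\omega(\mathbf{a}))\mid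 \mathbf{a}\in\{\mathbf{0}\}\cup\{\mathbf{e}_i-\mathbf{e}_j\mid\{i,j\}\text{ an edge of the cycle } C_N\}\}$, and ''upward-pointing inner normal'' refers to this lifted polytope (upward-pointing meaning positive last coordinate). *)

(* Defs.v *)
From mathcomp Require Import all_boot all_order all_algebra.
Set Implicit Arguments. Unset Strict Implicit. Unset Printing Implicit Defensive.
Import Order.TTheory GRing.Theory Num.Theory.
Local Open Scope ring_scope.

Section Defs.
Variable R : realFieldType.
Variable n : nat.   (* ambient dimension; N = n.+1 *)

(* Standard basis e_k of R^n indexed by k = 1..n (nat);
   e_0 = e_N = 0 (indeed e_k = 0 for k = 0 or k > n). *)
Definition ebasis (k : nat) : 'rV[R]_n :=
  \row_(m < n) (if m.+1 == k then 1 else 0).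

Definition omega (a : 'rV[R]_n) : R := if a == 0 then 0 else 1.

(* lifted point (a, h) in R^(n+1) = R^N; last coordinate h *)
Definition liftpt (a : 'rV[R]_n) (h : R) : 'rV[R]_n.+1 :=
  \row_(k < n.+1) (if unlift ord_max k is Some k' then a 0 k' else h).

Definition liftw (a : 'rV[R]_n) : 'rV[R]_n.+1 := liftpt a (omega a).

Definition dotv (y p : 'rV[R]_n.+1) : R := \sum_(k < n.+1) y 0 k * p 0 k.

(* lambda is given as a function on indices 1..N (values elsewhere are
   irrelevant). lambda \in Lambda_{j,N} with N = n.+1. *)
Definition in_Lambda_j (j : nat) (lam : nat -> R) : Prop :=
  [/\ (1 <= j <= n.+1)%N, lam j = 0,
      (forall i, (1 <= i <= n.+1)%N -> i <> j -> lam i = 1 \/ lam i = -1)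
    & \sum_(1 <= i < n.+2) lam i = 0].

Definition G0verts (j : nat) (lam : nat -> R) : seq 'rV[R]_n :=
  0 :: [seq lam i *: (ebasis i.-1 - ebasis i) | i <- iota 1 n.+1 & i != j].

(* points of the adjacency polytope of the cycle C_N on vertices 1..N:
   0 and e_i - e_j for every (oriented) edge {i, j} *)
Definition adjpts : seq 'rV[R]_n :=
  0 :: flatten [seq [:: ebasis i - ebasis (i %% n.+1).+1;
                       ebasis (i %% n.+1).+1 - ebasis i] | i <- iota 1 n.+1].

Definition is_inner_normal (P F : seq 'rV[R]_n.+1) (y : 'rV[R]_n.+1) : Prop :=
  exists c : R, (forall f, f \in F -> dotv y f = c) /\
                (forall p, p \in P -> c <= dotv y p).

Definition xnormal (lam : nat -> R) : 'rV[R]_n.+1 :=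
  \row_(k < n.+1) (if (k < n)%N then \sum_(1 <= i < k.+2) lam i else 1).

End Defs.

(* Main.v *)
Require Import Defs.
From mathcomp Require Import all_boot all_order all_algebra.
From mathcomp Require Import ring lra zify.
Import Order.TTheory GRing.Theory Num.Theory.
Local Open Scope ring_scope.

Module Helpers.
Set Implicit Arguments. Unset Strict Implicit.
Section H.
Variable R : realFieldType.
Variable n : nat.

Definition L (y : 'rV[R]_n.+1) (a : 'rV[R]_n) : R :=
  \sum_(m < n) y 0 (lift ord_max m) * a 0 m.

Definition Y (y : 'rV[R]_n.+1) (k : nat) : R :=
  if k is k'.+1 then (if (k' < n)%N then y 0 (inord k') else 0) else 0.

Lemma dot_liftw y a : dotv y (liftw a) = L y a + y 0 ord_max * omega a.
Proof.
rewrite /dotv big_ord_recr /= /L; congr (_ + _).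
  apply: eq_bigr => i _.
  have -> : widen_ord (leqnSn n) i = lift ord_max i by apply: val_inj; exact: (esym (lift_max i)).
  by rewrite /liftw /liftpt mxE liftK.
by rewrite /liftw /liftpt mxE unlift_none.
Qed.

Lemma LB y a b : L y (a - b) = L y a - L y b.
Proof. rewrite /L -sumrB; apply: eq_bigr => i _; rewrite !mxE; ring. Qed.

Lemma LZ y c a : L y (c *: a) = c * L y a.
Proof. rewrite /L mulr_sumr; apply: eq_bigr => i _; rewrite !mxE; ring. Qed.

Lemma L0 y : L y 0 = 0.
Proof. by rewrite /L big1 // => i _; rewrite mxE mulr0. Qed.

Lemma Le y k : L y (ebasis R n k) = Y y k.
Proof.
rewrite /L /Y.
case: k => [|k].
  by rewrite big1 // => i _; rewrite mxE /= mulr0.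
case: ifP => hk.
  rewrite (eq_bigr (fun m : 'I_n => if m == Ordinal hk then y 0 (lift ord_max m) else 0)).
    rewrite -big_mkcond big_pred1_eq; congr (y 0 _); apply: val_inj.
    rewrite /= inordK; [exact: (lift_max (Ordinal hk)) | by rewrite ltnW // ltnS].
  move=> i _; rewrite mxE eqSS; case: (i =P Ordinal hk) => [->|ne].
    by rewrite eqxx mulr1.
  case: eqP => [e|]; last by rewrite mulr0.
  by exfalso; apply: ne; apply: val_inj.
rewrite big1 // => i _; rewrite mxE eqSS; case: eqP => [e|]; last by rewrite mulr0.
by move: (ltn_ord i); rewrite e hk.
Qed.

Lemma omega_ge y a : -1 <= L y a -> 0 <= L y a + omega a.
Proof.
rewrite /omega; case: eqP => [->|_]; first by rewrite L0 addr0.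
by move=> h; lra.
Qed.


Definition S (lam : nat -> R) (k : nat) : R := \sum_(1 <= i < k.+1) lam i.

Lemma SS lam k : S lam k.+1 = S lam k + lam k.+1.
Proof. by rewrite /S big_nat_recr. Qed.

Lemma S0 lam : S lam 0 = 0.
Proof. by rewrite /S big_geq. Qed.

Lemma tele (f : nat -> R) k : \sum_(1 <= i < k.+1) (f i - f i.-1) = f k - f 0.
Proof.
elim: k => [|k IH]; first by rewrite big_geq // subrr.
by rewrite big_nat_recr //= IH; ring.
Qed.

Lemma Yx (lam : nat -> R) k : (k <= n)%N -> Y (xnormal n lam) k = S lam k.
Proof.
case: k => [|k] hk /=; first by rewrite S0.
by rewrite hk mxE inordK ?hk // ltnW.
Qed.

Lemma YN y : Y y n.+1 = 0.
Proof. by rewrite /= ltnn. Qed.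

Lemma Yx_all (lam : nat -> R) j : in_Lambda_j n j lam -> forall k, (k <= n.+1)%N ->
  Y (xnormal n lam) k = S lam k.
Proof.
case=> _ _ _ hs k; rewrite leq_eqVlt => /orP [/eqP ->|]; last by rewrite ltnS; apply: Yx.
by rewrite YN /S hs.
Qed.

Lemma lam_bd (lam : nat -> R) j : in_Lambda_j n j lam -> forall k, (1 <= k <= n.+1)%N ->
  -1 <= lam k <= 1.
Proof.
case=> _ hj hpm _ k hk; have [->|ne] := eqVneq k j; first by rewrite hj; apply/andP; split; lra.
by case: (hpm k hk (elimN eqP ne)) => ->; apply/andP; split; lra.
Qed.

Lemma Lv y (lam : nat -> R) i : (1 <= i)%N ->
  L y (lam i *: (ebasis R n i.-1 - ebasis R n i)) = lam i * (Y y i.-1 - Y y i).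
Proof. by move=> _; rewrite LZ LB !Le. Qed.

Lemma Lxv (lam : nat -> R) j : in_Lambda_j n j lam -> forall i, (1 <= i <= n.+1)%N -> i != j ->
  L (xnormal n lam) (lam i *: (ebasis R n i.-1 - ebasis R n i)) = -1.
Proof.
move=> hl i /andP [h1 h2] ne; rewrite Lv // !(Yx_all hl)  //; last by rewrite (leq_trans (leq_pred i)).
case: i h1 h2 ne => // i _ h2 ne; rewrite SS /=.
case: hl => _ _ hpm _; case: (hpm i.+1 h2 (elimN eqP ne)) => ->; ring.
Qed.

Lemma omega1 (a : 'rV[R]_n) z : L z a = -1 -> omega a = 1.
Proof. by rewrite /omega; case: eqP => // ->; rewrite L0 => /eqP; rewrite -subr_eq0 opprK add0r oner_eq0. Qed.

End H.
End Helpers.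
Import Helpers.

Theorem corollary5p8 (R : realFieldType) (n : nat) (j : nat) (lam : nat -> R) :
  (2 <= n)%N -> odd n.+1 -> in_Lambda_j n j lam ->
  forall y : 'rV[R]_n.+1, y 0 ord_max = 1 ->
    (is_inner_normal [seq liftw a | a <- adjpts R n]
                     [seq liftw a | a <- G0verts n j lam] y
     <-> y = xnormal n lam).
Proof.
move=> n2 _ hl y yN.
have key a : dotv y (liftw a) = L y a + omega a by rewrite dot_liftw yN mul1r.
have inG i : (1 <= i <= n.+1)%N -> i != j ->
    liftw (lam i *: (ebasis R n i.-1 - ebasis R n i)) \in
    [seq liftw a | a <- G0verts n j lam].
  move=> hi ne; apply: map_f; rewrite inE; apply/orP; right.
  by apply: (map_f (fun i => lam i *: (ebasis R n i.-1 - ebasis R n i))); rewrite mem_filter ne mem_iota add1n ltnS.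
have om1 i : (1 <= i <= n.+1)%N -> i != j ->
    omega (lam i *: (ebasis R n i.-1 - ebasis R n i)) = 1.
  by move=> hi ne; apply: (omega1 (Lxv hl hi ne)).
split.
- case=> c [HF HP].
  have c0 : c = 0.
    have := HF (liftw 0) (map_f _ (mem_head _ _)).
    by rewrite key L0 /omega eqxx addr0.
  have step i : (1 <= i <= n.+1)%N -> i != j -> Y y i - Y y i.-1 - lam i = 0.
    move=> hi ne; have := HF _ (inG i hi ne).
    rewrite key c0 om1 // Lv; last by case/andP: hi.
    case: hl => _ _ hpm _; case: (hpm i hi (elimN eqP ne)) => ->; lra.
  have stepj : Y y j - Y y j.-1 - lam j = 0.
    have hs : \sum_(1 <= i < n.+2) (Y y i - Y y i.-1 - lam i) = 0.
      case: (hl) => _ _ _ hls.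
      rewrite sumrB tele YN hls /=; lra.
    case: (hl) => hj _ _ _.
    have u : uniq (index_iota 1 n.+2) by apply: iota_uniq.
    have m : j \in index_iota 1 n.+2 by rewrite mem_index_iota ltnS.
    rewrite (bigD1_seq j m u) /= in hs.
    rewrite big1_seq in hs; first by rewrite addr0 in hs.
    move=> i /andP [ne]; rewrite mem_index_iota ltnS => hi; exact: step.
  have all i : (1 <= i <= n.+1)%N -> Y y i - Y y i.-1 - lam i = 0.
    by move=> hi; have [->|ne] := eqVneq i j; [exact: stepj | exact: step].
  have YS k : (k <= n.+1)%N -> Y y k = S lam k.
    elim: k => [|k IH] hk; first by rewrite S0.
    rewrite SS -IH; last by rewrite ltnW.
    have := all k.+1 hk; rewrite /=; lra.
  apply/rowP => k; rewrite mxE.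
  case: ifP => hk.
    have := YS k.+1; rewrite /= hk inord_val => ->; last by rewrite ltnW.
    by [].
  have -> : k = ord_max by apply: val_inj => /=; move: (ltn_ord k) hk; lia.
  exact: yN.
- move=> ey; exists 0; split.
  + move=> f /mapP [a ha ->]; rewrite key.
    move: ha; rewrite inE => /orP [/eqP ->|]; first by rewrite L0 /omega eqxx addr0.
    case/mapP => i; rewrite mem_filter mem_iota add1n ltnS => /andP [ne hi] ->.
    by rewrite om1 // ey (Lxv hl hi ne) addNr.
  + move=> p /mapP [a ha ->]; rewrite key; apply: omega_ge.
    move: ha; rewrite inE => /orP [/eqP ->|]; first by rewrite L0; lra.
    case/flatten_mapP => i; rewrite mem_iota add1n ltnS => hi.
    have hb : -1 <= L y (ebasis R n i - ebasis R n (i %% n.+1).+1) <= 1.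
      case/andP: hi => h1 h2.
      have hm : ((i %% n.+1).+1 <= n.+1)%N by rewrite ltn_mod.
      rewrite LB !Le ey !(Yx_all hl) //.
      move: h2; rewrite leq_eqVlt => /orP [/eqP eN|h2].
        have hN : S lam n.+1 = 0 by case: (hl).
        rewrite eN modnn hN SS S0.
        have := lam_bd hl (isT : (1 <= 1 <= n.+1)%N); move=> /andP [? ?]; apply/andP; split; lra.
      rewrite modn_small // SS.
      have := lam_bd hl (h2 : (1 <= i.+1 <= n.+1)%N); move=> /andP [? ?]; apply/andP; split; lra.
    rewrite !inE => /orP [/eqP ->|/eqP ->]; first by case/andP: hb.
    rewrite LB; rewrite LB in hb; case/andP: hb => ? ?.
    lra.
Qed.
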